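(* For $n\ge 4$, let $\Phi_n$ be the set of all graphs on $n$ vertices with non-negative integer weights on their edges such that every subgraph spanned by at least $4$ vertices has total weight at least $3$, and let $\phi_n$ be the minimum total weight among all graphs in $\Phi_n$. Then $$\phi_n=\left\lceil\tfrac{1}{3}n(n-2)\right\rceil.$$
   Context: The total weight of a (sub)graph is the sum of the weights of its edges; the subgraph spanned by a set of vertices consists of those vertices and all edges between them. *)

(* Defs.v *)
From mathcomp Require Import all_boot all_order.
Set Implicit Arguments. Unset Strict Implicit. Unset Printing Implicit Defensive.

(* A graph on n vertices with non-negative integer edge weights is encoded
   as a weight function on vertex pairs; only pairs i < j are read, so each
   unordered pair {i,j} carries exactly one weight w i j (weight 0 = no edge,
   which contributes nothing to any total weight). *)
Definition weighting (n : nat) := 'I_n -> 'I_n -> nat.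

Definition span_weight n (w : weighting n) (S : {set 'I_n}) : nat :=
  \sum_(i in S) \sum_(j in S | i < j) w i j.

Definition total_weight n (w : weighting n) : nat := span_weight w setT.

Definition in_Phi n (w : weighting n) : Prop :=
  forall S : {set 'I_n}, 4 <= #|S| -> 3 <= span_weight w S.

Definition ceil_div (a b : nat) : nat := (a + b.-1) %/ b.

(* Main.v *)
Require Import Defs.
From mathcomp Require Import all_boot all_order zify.
Set Implicit Arguments. Unset Strict Implicit. Unset Printing Implicit Defensive.

Definition cw n (w : weighting n) (i j : 'I_n) : nat := if i < j then w i j else 0.
Definition sp n (w : weighting n) (S : {set 'I_n}) : nat :=
  \sum_(i in S) \sum_(j in S) cw w i j.
Definition cr n (w : weighting n) (A B : {set 'I_n}) : nat :=
  \sum_(i in A) \sum_(j in B) (cw w i j + cw w j i).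

Lemma span_sp n (w : weighting n) S : span_weight w S = sp w S.
Proof. by rewrite /span_weight /sp; apply: eq_bigr => i _; rewrite big_mkcondr. Qed.

Lemma sumU n (A B : {set 'I_n}) (F : 'I_n -> nat) : [disjoint A & B] ->
  \sum_(i in A :|: B) F i = \sum_(i in A) F i + \sum_(i in B) F i.
Proof.
move=> dAB; rewrite (big_setID A) setUK setDUl setDv set0U.
have -> : B :\: A = B by apply/setDidPl; rewrite disjoint_sym.
by [].
Qed.

Lemma spU n (w : weighting n) (A B : {set 'I_n}) : [disjoint A & B] ->
  sp w (A :|: B) = sp w A + sp w B + cr w A B.
Proof.
move=> dAB; rewrite /sp /cr sumU //.
have E : forall i, \sum_(j in A :|: B) cw w i j =
   \sum_(j in A) cw w i j + \sum_(j in B) cw w i j by move=> i; rewrite sumU.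
under eq_bigr do rewrite E.
under [X in _ + X = _]eq_bigr do rewrite E.
under [X in _ = _ + X]eq_bigr do rewrite big_split.
rewrite !big_split /= [\sum_(i in A) \sum_(j in B) cw w j i]exchange_big /=.
lia.
Qed.

Lemma sp1 n (w : weighting n) v : sp w [set v] = 0.
Proof. by rewrite /sp !big_set1 /cw ltnn. Qed.

Lemma cr_split n (w : weighting n) (T R : {set 'I_n}) :
  cr w T R = \sum_(v in R) cr w T [set v].
Proof.
rewrite /cr exchange_big /=; apply: eq_bigr => v _.
by apply: eq_bigr => i _; rewrite big_set1.
Qed.

Lemma crC n (w : weighting n) (A B : {set 'I_n}) : cr w A B = cr w B A.
Proof.
rewrite /cr exchange_big /=; apply: eq_bigr => i _; apply: eq_bigr => j _.
by rewrite addnC.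
Qed.

Lemma crlb n (w : weighting n) (T R : {set 'I_n}) k :
  (forall v, v \in R -> k <= cr w T [set v]) -> #|R| * k <= cr w T R.
Proof.
move=> H; rewrite cr_split -sum_nat_const; exact: leq_sum.
Qed.

Lemma sp_card4 n (w : weighting n) (T : {set 'I_n}) v :
  in_Phi w -> #|T| = 3 -> v \notin T -> 3 <= sp w T + cr w T [set v].
Proof.
move=> Phi T3 vT.
have := Phi (v |: T); rewrite cardsU1 vT T3 span_sp => /(_ isT).
rewrite spU; last by rewrite disjoints1.
by rewrite sp1 crC.
Qed.

Lemma step n (w : weighting n) (S T : {set 'I_n}) : in_Phi w ->
  T \subset S -> #|T| = 3 ->
  sp w T + sp w (S :\: T) + (#|S| - 3) * (3 - sp w T) <= sp w S.
Proof.
move=> Phi TS T3.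
have ES : T :|: (S :\: T) = S.
  apply/setP => x; rewrite !inE; case xT: (x \in T) => //=.
  by rewrite (subsetP TS x xT).
have dT : [disjoint T & S :\: T].
  by case/subsetDP: (subxx (S :\: T)) => _; rewrite disjoint_sym.
have cR : #|S :\: T| = #|S| - 3.
  by rewrite cardsD (setIidPr TS) T3.
rewrite -[in X in _ <= X]ES spU // -cR.
have := @crlb n w T (S :\: T) (3 - sp w T).
have : forall v, v \in S :\: T -> 3 - sp w T <= cr w T [set v].
  move=> v; rewrite inE => /andP [vT _].
  have := sp_card4 Phi T3 vT; lia.
move=> H /(_ H); lia.
Qed.

Lemma spD1 n (w : weighting n) (S : {set 'I_n}) v : v \in S ->
  sp w S = sp w (S :\ v) + cr w [set v] (S :\ v).
Proof.
move=> vS; rewrite -{1}(setD1K vS) spU ?sp1 //.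
by rewrite disjoints1 !inE eqxx.
Qed.

Lemma degsum n (w : weighting n) (S : {set 'I_n}) :
  \sum_(v in S) cr w [set v] (S :\ v) = 2 * sp w S.
Proof.
rewrite (eq_bigr (fun v => \sum_(j in S) (cw w v j + cw w j v))); last first.
  move=> v vS; rewrite /cr big_set1 [RHS](big_setD1 v vS) /= /cw ltnn.
  by [].
rewrite (eq_bigr (fun v => \sum_(j in S) cw w v j + \sum_(j in S) cw w j v));
  last by move=> v _; rewrite big_split.
rewrite big_split /= [\sum_(i in S) \sum_(j in S) cw w j i]exchange_big /=.
by rewrite /sp mul2n -addnn.
Qed.

Lemma all2 n (w : weighting n) m : forall (S : {set 'I_n}), #|S| = m.+3 ->
  (forall T : {set 'I_n}, T \subset S -> #|T| = 3 -> 2 <= sp w T) ->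
  m.+3 * m.+2 <= 3 * sp w S.
Proof.
elim: m => [|m IH] S Sm H.
  have := H S (subxx S) Sm; lia.
have E : \sum_(v in S) sp w (S :\ v) + 2 * sp w S = m.+4 * sp w S.
  rewrite -degsum -big_split /= -Sm -sum_nat_const.
  by apply: eq_bigr => v vS; rewrite -spD1.
have L : \sum_(v in S) (m.+3 * m.+2) <= \sum_(v in S) 3 * sp w (S :\ v).
  apply: leq_sum => v vS; apply: IH.
    by have := cardsD1 v S; rewrite vS Sm; lia.
  move=> T TS T3; apply: H => //; apply: subset_trans TS _; exact: subsetDl.
rewrite sum_nat_const -big_distrr /= Sm in L.
move: E L; set X := \sum_(v in S) _ => E L. have : m.+2 * (m.+4 * m.+3) <= m.+2 * (3 * sp w S) by nia.
by rewrite leq_pmul2l.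
Qed.

Lemma arith1 m k r : 4 <= m -> k <= 1 ->
  (7 <= m -> ceil_div ((m - 3) * (m - 3 - 2)) 3 <= r) ->
  (m = 6 -> k = 1 -> 1 <= r) ->
  ceil_div (m * (m - 2)) 3 <= k + r + (m - 3) * (3 - k).
Proof.
rewrite /ceil_div /= => m4 k1 H7 H6.
case: (ltnP m 7) => hm.
  have : (m = 4) \/ (m = 5) \/ (m = 6) by lia.
  case=> [Em|[Em|Em]]; subst m; try lia.
have := H7 hm.
have -> : m * (m - 2) + 2 = ((m - 3) * (m - 3 - 2) + 2) + 3 * (2 * m - 5) by nia.
move: ((m - 3) * (m - 3 - 2)) => X.
have : k = 0 \/ k = 1 by lia.
case=> ->; lia.
Qed.

Lemma arith2 j s : j.+3 * j.+2 <= 3 * s -> ceil_div (j.+3 * (j.+3 - 2)) 3 <= s.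
Proof.
rewrite /ceil_div /= => H.
have : j.+3 * (j.+3 - 2) + 2 <= 3 * s by nia.
move: (j.+3 * (j.+3 - 2)) => X; lia.
Qed.

Lemma LB n (w : weighting n) : in_Phi w -> forall m (S : {set 'I_n}),
  #|S| = m -> 4 <= m -> ceil_div (m * (m - 2)) 3 <= sp w S.
Proof.
move=> Phi; elim/ltn_ind => m IH S Sm m4.
have key : forall T : {set 'I_n}, T \subset S -> #|T| = 3 -> sp w T <= 1 ->
    (sp w T = 1 -> forall U : {set 'I_n}, U \subset S -> #|U| = 3 -> 1 <= sp w U) ->
    ceil_div (m * (m - 2)) 3 <= sp w S.
  move=> T TS T3 Tle Hall.
  have St := step Phi TS T3.
  have cR : #|S :\: T| = m - 3 by rewrite cardsD (setIidPr TS) T3 Sm.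
  apply: leq_trans (arith1 (k := sp w T) (r := sp w (S :\: T)) m4 Tle _ _) _.
  - move=> m7; apply: IH; [lia | exact: cR | lia].
  - move=> m6 T1; apply: (Hall T1); first exact: subsetDl.
    by rewrite cR m6.
  - by rewrite -Sm.
case: (boolP [exists T : {set 'I_n}, [&& T \subset S, #|T| == 3 & sp w T == 0]]).
  move/existsP => [T /and3P [TS /eqP T3 /eqP T0]].
  by apply: (key T) => //; rewrite T0.
move/existsPn => H0.
have H1 : forall U : {set 'I_n}, U \subset S -> #|U| = 3 -> 1 <= sp w U.
  move=> U US U3; have := H0 U; rewrite US U3 eqxx /=; lia.
case: (boolP [exists T : {set 'I_n}, [&& T \subset S, #|T| == 3 & sp w T == 1]]).
  move/existsP => [T /and3P [TS /eqP T3 /eqP T1]].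
  by apply: (key T) => //; rewrite T1.
move/existsPn => H2.
have H3 : forall U : {set 'I_n}, U \subset S -> #|U| = 3 -> 2 <= sp w U.
  move=> U US U3; have := H0 U; have := H2 U; rewrite US U3 eqxx /=; lia.
have Em : m = (m - 3).+3 by lia.
have Sm' : #|S| = (m - 3).+3 by rewrite -Em.
have := all2 Sm' H3.
move/arith2; by rewrite -Em.
Qed.

Definition g (a x y : nat) : nat := if y < a then 1 else if a <= x then 2 else 0.
Definition h (a x y : nat) : nat := if x < y then g a x y else 0.
Definition w0 n a : weighting n := fun i j => g a i j.
Definition D a N := \sum_(i < N) \sum_(j < N) h a i j.

Lemma spw0 n a : sp (@w0 n a) setT = D a n.
Proof.
rewrite /sp /D; under eq_bigl do rewrite in_setT.
by apply: eq_bigr => i _; under eq_bigl do rewrite in_setT.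
Qed.

Lemma Drec a N : D a N.+1 = D a N + \sum_(i < N) h a i N.
Proof.
rewrite /D big_ord_recr /=.
under eq_bigr do rewrite big_ord_recr /=.
rewrite big_split /= big_ord_recr /=.
have -> : \sum_(j < N) h a N j = 0.
  by apply: big1 => j _; rewrite /h ltnNge ltnW.
have -> : h a N N = 0 by rewrite /h ltnn.
have -> : \sum_(i < N) h a i N = \sum_(i < N) h a i N by [].
lia.
Qed.

Lemma col1 a N : \sum_(i < N) (if a <= i then 2 else 0) = 2 * (N - a).
Proof.
elim: N => [|N IH]; first by rewrite big_ord0.
rewrite big_ord_recr /= IH; case: (leqP a N) => hh. all: lia.
Qed.

Lemma col a N : \sum_(i < N) h a i N = if N < a then N else 2 * (N - a).
Proof.
rewrite /h.
under eq_bigr => i _ do rewrite (ltn_ord i) /g.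
case: ltnP => hN.
  by rewrite sum_nat_const card_ord muln1.
exact: col1.
Qed.

Lemma Dlow a N : N <= a -> 2 * D a N = N * (N - 1).
Proof.
elim: N => [|N IH] hN; first by rewrite /D big_ord0.
rewrite Drec col hN mulnDr IH; [nia | lia].
Qed.

Lemma Dhigh a k : D a (a + k) = D a a + k * (k - 1).
Proof.
elim: k => [|k IH]; first by rewrite addn0 mul0n addn0.
rewrite addnS Drec IH col ltnNge leq_addr /=; nia.
Qed.

Lemma arith3 n : 4 <= n ->
  2 * ((n * (n - 2) + 2) %/ 3) =
  (n - (n + 1) %/ 3) * (n - (n + 1) %/ 3 - 1) + 2 * ((n + 1) %/ 3 * ((n + 1) %/ 3 - 1)).
Proof.
move=> n4.
have := divn_eq n 3; have := @ltn_pmod n 3 isT.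
move: (n %/ 3) (n %% 3) => q r hr En.
have : r = 0 \/ r = 1 \/ r = 2 by lia.
case=> [Er|[Er|Er]]; subst r.
- have [p Ep] : exists p, q = p + 2 by exists (q - 2); lia.
  subst q; subst n.
  have -> : ((p + 2) * 3 + 0 + 1) %/ 3 = p + 2 by lia.
  have -> : (p + 2) * 3 + 0 - (p + 2) - 1 = 2 * p + 3 by lia.
  have -> : (p + 2) * 3 + 0 - (p + 2) = 2 * p + 4 by lia.
  have -> : (p + 2) * 3 + 0 - 2 = 3 * p + 4 by lia.
  have -> : p + 2 - 1 = p + 1 by lia.
  have -> : ((p + 2) * 3 + 0) * (3 * p + 4) + 2 = (3 * (p * p) + 10 * p + 8) * 3 + 2 by lia.
  rewrite divnMDl //; lia.
- have [p Ep] : exists p, q = p + 1 by exists (q - 1); lia.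
  subst q; subst n.
  have -> : ((p + 1) * 3 + 1 + 1) %/ 3 = p + 1 by lia.
  have -> : (p + 1) * 3 + 1 - (p + 1) - 1 = 2 * p + 2 by lia.
  have -> : (p + 1) * 3 + 1 - (p + 1) = 2 * p + 3 by lia.
  have -> : (p + 1) * 3 + 1 - 2 = 3 * p + 2 by lia.
  have -> : p + 1 - 1 = p by lia.
  have -> : ((p + 1) * 3 + 1) * (3 * p + 2) + 2 = (3 * (p * p) + 6 * p + 3) * 3 + 1 by lia.
  rewrite divnMDl //; lia.
- have [p Ep] : exists p, q = p + 1 by exists (q - 1); lia.
  subst q; subst n.
  have -> : ((p + 1) * 3 + 2 + 1) %/ 3 = p + 2 by lia.
  have -> : (p + 1) * 3 + 2 - (p + 2) - 1 = 2 * p + 2 by lia.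
  have -> : (p + 1) * 3 + 2 - (p + 2) = 2 * p + 3 by lia.
  have -> : (p + 1) * 3 + 2 - 2 = 3 * p + 3 by lia.
  have -> : p + 2 - 1 = p + 1 by lia.
  have -> : ((p + 1) * 3 + 2) * (3 * p + 3) + 2 = (3 * (p * p) + 8 * p + 5) * 3 + 2 by lia.
  rewrite divnMDl //; lia.
Qed.

Lemma total_w0 n : 4 <= n ->
  total_weight (@w0 n (n - (n + 1) %/ 3)) = ceil_div (n * (n - 2)) 3.
Proof.
move=> n4; rewrite /total_weight span_sp spw0.
set b := (n + 1) %/ 3; set a := n - b.
have hb : b <= n by rewrite /b; lia.
have En : n = a + b by rewrite /a; lia.
have := arith3 n4; rewrite -/b -/a /ceil_div /= => E.
apply/eqP; rewrite -(eqn_pmul2l (isT : 0 < 2)) E; apply/eqP.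
rewrite {1}En Dhigh mulnDr Dlow //.
Qed.

Lemma complete n (w : weighting n) k : forall m (X : {set 'I_n}), #|X| = m ->
  (forall i j, i \in X -> j \in X -> i < j -> k <= w i j) ->
  k * (m * (m - 1)) <= 2 * sp w X.
Proof.
elim=> [|m IH] X Xm H; first by rewrite mul0n muln0.
have [v vX] : exists v, v \in X.
  by apply/set0Pn; rewrite -card_gt0 Xm.
have Xv : #|X :\ v| = m by have := cardsD1 v X; rewrite vX Xm; lia.
have IH' := IH (X :\ v) Xv (fun i j hi hj => H i j (subsetP (subsetDl _ _) i hi)
                                               (subsetP (subsetDl _ _) j hj)).
have C : #|X :\ v| * k <= cr w [set v] (X :\ v).
  rewrite /cr big_set1 -sum_nat_const; apply: leq_sum => j.
  rewrite !inE => /andP [jv jX].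
  rewrite /cw; case: (ltngtP v j) => hvj.
  - have := H v j vX jX hvj; lia.
  - have := H j v jX vX hvj; lia.
  - by move: jv; rewrite (val_inj hvj) eqxx.
rewrite (spD1 w vX); move: IH' C; rewrite Xv.
have -> : m.+1 * (m.+1 - 1) = m * (m - 1) + 2 * m by case: (m) => [|m0] //; rewrite !subn1 /=; lia.
move: (m * (m - 1)) => M; nia.
Qed.

Lemma phi_w0 n a : in_Phi (@w0 n a).
Proof.
move=> S S4; rewrite span_sp.
set A := [set i : 'I_n | i < a].
have dis : [disjoint S :&: A & S :\: A].
  rewrite disjoints_subset; apply/subsetP => x; rewrite !inE.
  by case/andP => _ ->.
have cS := cardsID A S.
rewrite -(setID S A) spU //.
have HA := complete (k := 1) (erefl #|S :&: A|) (w := @w0 n a).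
have HB := complete (k := 2) (erefl #|S :\: A|) (w := @w0 n a).
have : 1 * (#|S :&: A| * (#|S :&: A| - 1)) <= 2 * sp (@w0 n a) (S :&: A).
  apply: HA => i j; rewrite !inE => /andP [_ ia] /andP [_ ja] ij.
  by rewrite /w0 /g ja.
have : 2 * (#|S :\: A| * (#|S :\: A| - 1)) <= 2 * sp (@w0 n a) (S :\: A).
  apply: HB => i j; rewrite !inE => /andP [ia _] /andP [ja _] ij.
  have ai : a <= i by rewrite leqNgt.
  by rewrite /w0 /g (negbTE ja) ai.
move: S4; rewrite -cS.
move: #|S :&: A| #|S :\: A| => x y.
move: (sp (@w0 n a) (S :&: A)) (sp (@w0 n a) (S :\: A)) (cr _ _ _) => p q r.
move=> h4 hq hp.
have : 6 <= x * (x - 1) + 2 * (y * (y - 1)).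
  case: x h4 {hp} => [|[|[|x]]] h4; rewrite ?subn1 /=; nia.
lia.
Qed.

Theorem theorem7p5 (n : nat) (hn : 4 <= n) :
  (exists w : weighting n, in_Phi w /\ total_weight w = ceil_div (n * (n - 2)) 3) /\
  (forall w : weighting n, in_Phi w -> ceil_div (n * (n - 2)) 3 <= total_weight w).
Proof.
split.
  exists (@w0 n (n - (n + 1) %/ 3)); split; [exact: phi_w0 | exact: total_w0].
move=> w Phi; rewrite /total_weight span_sp.
apply: (LB Phi _ hn); by rewrite cardsT card_ord.
Qed.
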